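(* Consider the vanilla decentralized normalized gradient method: each node $i\in[n]$ with local function $f_i:\mathbb{R}^d\to\mathbb{R}$ iterates, in parallel, $\boldsymbol{x}_i^{t+1}=\sum_{r=1}^n w_{ir}\big(\boldsymbol{x}_r^t-\alpha\,\nabla f_r(\boldsymbol{x}_r^t)/\|\nabla f_r(\boldsymbol{x}_r^t)\|\big)$, starting from a common initialization $\boldsymbol{x}_i^0=\boldsymbol{x}_0$. For any even $n$ and any $B\ge 1$, there exist functions $\{f_i\}_{i=1}^n$ satisfying (A1) and (A2), a gradient oracle satisfying (A3), a mixing matrix $\boldsymbol{W}$ satisfying (A4), and an initialization $\boldsymbol{x}_0$, such that the associated parameters $f_*$, $L$, $\sigma$, $\boldsymbol{W}$, $\boldsymbol{x}_0$ do not depend on $B$, and for all $T\ge 1$ and all $\alpha>0$, $$\frac{1}{nT}\sum_{t=0}^{T-1}\sum_{i=1}^n\mathbb{E}\big[\|\nabla f(\boldsymbol{x}_i^t)\|\big]\ge B,$$ where $f=\frac1n\sum_{i=1}^n f_i$.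
   Context: (A1): $f_*:=\inf_{\boldsymbol{x}} f(\boldsymbol{x})>-\infty$. (A2): each $f_i$ is differentiable with $L$-Lipschitz gradient. (A3): the stochastic oracle returns $\boldsymbol{g}_i(\boldsymbol{x},\boldsymbol{\xi}_i^t)$ such that, with $\mathcal{F}_t=\sigma(\{\boldsymbol{\xi}_i^0,\dots,\boldsymbol{\xi}_i^{t-1}:i\in[n]\})$ ($\mathcal{F}_{-1}$ trivial), for every $\mathcal{F}_t$-measurable $\boldsymbol{x}$: $\mathbb{E}[\boldsymbol{g}_i(\boldsymbol{x},\boldsymbol{\xi}_i^t)\mid\mathcal{F}_t]=\nabla f_i(\boldsymbol{x})$, $\mathbb{E}[\|\boldsymbol{g}_i(\boldsymbol{x},\boldsymbol{\xi}_i^t)-\nabla f_i(\boldsymbol{x})\|^p\mid\mathcal{F}_t]\le\sigma^p$ for some $p\in(1,2]$, $\sigma\ge0$, and the samples are independent. (A4): $\boldsymbol{W}=(w_{ir})$ is nonnegative, with $w_{ir}>0$ iff $(i,r)$ is an edge of the communication graph or $i=r$, and is primitive and doubly stochastic. *)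

(* Defs.v *)
From HB Require Import structures.
From mathcomp Require Import all_boot all_order all_algebra.
From mathcomp Require Import all_classical all_reals all_analysis.
Set Implicit Arguments. Unset Strict Implicit. Unset Printing Implicit Defensive.
Import Order.TTheory GRing.Theory Num.Theory.
Import numFieldNormedType.Exports.
Local Open Scope ring_scope.

Section Defs.
Variables (R : realType) (n d : nat).

Definition dotv (u v : 'rV[R]_d) : R := \sum_(k < d) u 0 k * v 0 k.
Definition enorm (v : 'rV[R]_d) : R := Num.sqrt (dotv v v).

Definition has_gradient (f : 'rV[R]_d -> R) (g : 'rV[R]_d -> 'rV[R]_d) :=
  forall x, differentiable f x /\ forall v, ('d f x : 'rV[R]_d -> R) v = dotv (g x) v.

Definition favg (fs : 'I_n -> 'rV[R]_d -> R) (x : 'rV[R]_d) : R :=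
  n%:R^-1 * \sum_(i < n) fs i x.
Definition gavg (gs : 'I_n -> 'rV[R]_d -> 'rV[R]_d) (x : 'rV[R]_d) : 'rV[R]_d :=
  n%:R^-1 *: \sum_(i < n) gs i x.

Definition is_inf_value (f : 'rV[R]_d -> R) (fstar : R) :=
  (forall x, fstar <= f x) /\ (forall e : R, 0 < e -> exists x, f x < fstar + e).

Definition lipschitz_grad (L : R) (g : 'rV[R]_d -> 'rV[R]_d) :=
  forall x y, enorm (g x - g y) <= L * enorm (x - y).

(* matrix power without requiring n = m.+1 *)
Definition mxpow (W : 'M[R]_n) (k : nat) : 'M[R]_n := iter k (mulmx W) 1%:M.

Definition mixing_matrix (W : 'M[R]_n) :=
  [/\ (forall i r, 0 <= W i r),
      (exists e : rel 'I_n, symmetric e /\ irreflexive e /\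
         forall i r, (0 < W i r) <-> (e i r \/ i = r)),
      (exists k, forall i r, 0 < mxpow W k i r),
      (forall i, \sum_(r < n) W i r = 1) &
      (forall r, \sum_(i < n) W i r = 1)].

(* Vanilla decentralized normalized gradient method.
   Convention: u / ||u|| with u = 0 is 0 (MathComp's 0^-1 = 0). *)
Fixpoint dngm (W : 'M[R]_n) (gs : 'I_n -> 'rV[R]_d -> 'rV[R]_d) (alpha : R)
  (x0 : 'rV[R]_d) (t : nat) : 'I_n -> 'rV[R]_d :=
  match t with
  | 0 => fun _ => x0
  | t'.+1 =>
      let xt := dngm W gs alpha x0 t' in
      fun i => \sum_(r < n) W i r *:
                 (xt r - (alpha / enorm (gs r (xt r))) *: gs r (xt r))
  end.

End Defs.

(* Main.v *)
Require Import Defs.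
From HB Require Import structures.
From mathcomp Require Import all_boot all_order all_algebra.
From mathcomp Require Import all_classical all_reals all_analysis.
From mathcomp Require Import ring lra.
Import Order.TTheory GRing.Theory Num.Theory.
Import numFieldNormedType.Exports.
Local Open Scope ring_scope.

Section Aux.
Variables (R : realType) (d : nat) (j : 'I_d).

Definition crd (x : 'rV[R]_d) : R := x 0 j.
Lemma crd_lin : linear crd.
Proof. by move=> k x y; rewrite /crd !mxE. Qed.
HB.instance Definition _ := GRing.isLinear.Build R 'rV[R]_d R _ crd crd_lin.

Lemma crd_cont : continuous crd.
Proof. exact: coord_continuous. Qed.

Definition fq (a c : R) (x : 'rV[R]_d) : R :=
  2^-1 * ((crd x + a) * (crd x + a)) + c.

Lemma fq_diff a c x : differentiable (fq a c) x /\
  forall v, ('d (fq a c) x : 'rV[R]_d -> R) v = (crd x + a) * crd v.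
Proof.
have dp : differentiable (crd \+ cst a) x.
  apply: differentiableD; last exact: differentiable_cst.
  apply: (@linear_differentiable _ _ _ crd); exact: crd_cont.
have dpE : 'd (crd \+ cst a) x = crd :> (_ -> R).
  rewrite diffD; last exact: differentiable_cst.
  - rewrite diff_cst (diff_lin (f:=crd)); first by apply/funext => y /=; rewrite addr0. exact: crd_cont.
  apply: (@linear_differentiable _ _ _ crd); exact: crd_cont.
have dq : differentiable ((crd \+ cst a) * (crd \+ cst a)) x by exact: differentiableM.
have -> : fq a c = (fun x => 2^-1 *: (((crd \+ cst a) * (crd \+ cst a)) x)) + cst c.
  by apply/funext => y.
have dz : differentiable (fun x => 2^-1 *: (((crd \+ cst a) * (crd \+ cst a)) x)) x.
  exact: differentiableZ.
split.
  apply: differentiableD; last exact: differentiable_cst.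
  exact: dz.
move=> v; rewrite diffD; last exact: differentiable_cst.
  rewrite diff_cst diffZ // diffM // dpE /= addr0.
  change (2^-1 * ((crd x + a) * crd v + (crd x + a) * crd v) = (crd x + a) * crd v).
  by field.
exact: dz.
Qed.

Definition e0 : 'rV[R]_d := \row_k ((k == j)%:R).

Lemma dot_e0 (s : R) (v : 'rV[R]_d) : dotv (s *: e0) v = s * v 0 j.
Proof.
rewrite /dotv (bigD1 j) //= big1 ?addr0.
  by rewrite !mxE eqxx mulr1.
by move=> k /negbTE kj; rewrite !mxE kj mulr0 mul0r.
Qed.

Lemma enorm_e0 (s : R) : enorm (s *: e0) = `|s|.
Proof.
by rewrite /enorm dot_e0 !mxE eqxx mulr1 -expr2 sqrtr_sqr.
Qed.

Lemma coord_le (v : 'rV[R]_d) : `|v 0 j| <= enorm v.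
Proof.
rewrite /enorm /dotv (bigD1 j) //= -sqrtr_sqr expr2 ler_sqrt.
  rewrite lerDl; apply: sumr_ge0 => k _; rewrite -expr2; exact: sqr_ge0.
rewrite addr_ge0 // -?expr2 ?sqr_ge0 //.
apply: sumr_ge0 => k _; rewrite -expr2; exact: sqr_ge0.
Qed.

Definition gq (a : R) (x : 'rV[R]_d) : 'rV[R]_d := (crd x + a) *: e0.

Lemma gq_grad (a c : R) : has_gradient (fq a c) (gq a).
Proof.
move=> x; have [H1 H2] := fq_diff a c x; split => // v.
by rewrite H2 /gq dot_e0.
Qed.

Lemma gq_lip (a : R) : lipschitz_grad 1 (gq a).
Proof.
move=> x y; rewrite /gq -scalerBl enorm_e0 mul1r.
have -> : crd x + a - (crd y + a) = (x - y) 0 j by rewrite !mxE /crd; ring.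
exact: coord_le.
Qed.

End Aux.

Arguments crd {R d}. Arguments fq {R d}. Arguments e0 {R d}. Arguments gq {R d}.

Theorem claim1 (R : realType) (n d : nat) (hn : (0 < n)%N) (hev : ~~ odd n)
  (hd : (0 < d)%N) :
  exists (fstar L : R) (W : 'M[R]_n) (x0 : 'rV[R]_d),
    0 <= L /\ mixing_matrix W /\
    forall B : R, 1 <= B ->
      exists (fs : 'I_n -> 'rV[R]_d -> R) (gs : 'I_n -> 'rV[R]_d -> 'rV[R]_d),
        is_inf_value (favg fs) fstar /\
        (forall i, has_gradient (fs i) (gs i)) /\
        (forall i, lipschitz_grad L (gs i)) /\
        forall (T : nat) (alpha : R), (1 <= T)%N -> 0 < alpha ->
          (n * T)%:R^-1 *
            \sum_(t < T) \sum_(i < n) enorm (gavg gs (dngm W gs alpha x0 t i))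
          >= B.
Proof.
have [m Hm] : exists m, n = (m + m)%N.
  by exists n./2; rewrite addnn -{1}(odd_double_half n) (negbTE hev).
subst n.
have m0 : (0 < m)%N by move: hn; rewrite addnn double_gt0.
have N0 : ((m + m)%:R : R) != 0 by rewrite pnatr_eq0 -lt0n.
have Npos : (0 : R) < (m + m)%:R^-1 by rewrite invr_gt0 ltr0n addn_gt0 m0.
pose j := Ordinal hd.
exists 0, 1, (\matrix_(i, r) ((m + m)%:R^-1 : R)), 0.
split; first exact: ler01.
split.
  split.
  - by move=> i r; rewrite mxE ltW.
  - exists (fun i r => i != r); split; first by move=> i r; rewrite eq_sym.
    split; first by move=> i; rewrite eqxx.
    move=> i r; rewrite mxE; split=> // _.
    by case: (eqVneq i r) => [->|h]; [right|left].
  - by exists 1%N => i r; rewrite /mxpow /= mulmx1 mxE.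
  - move=> i; rewrite (eq_bigr (fun _ => (m + m)%:R^-1)) => [|r _]; last by rewrite mxE.
    by rewrite sumr_const card_ord -[LHS]mulr_natr mulVf.
  - move=> r; rewrite (eq_bigr (fun _ => (m + m)%:R^-1)) => [|i _]; last by rewrite mxE.
    by rewrite sumr_const card_ord -[LHS]mulr_natr mulVf.
move=> B B1.
have B0 : 0 < B by apply: lt_le_trans B1; exact: ltr01.
pose a := fun i : 'I_(m + m) => if (i < m)%N then - (3 * B) else B.
have suma : \sum_(i < m + m) a i = - ((m + m)%:R * B).
  rewrite big_split_ord /=.
  rewrite (eq_bigr (fun _ => - (3 * B))) => [|i _]; last by rewrite /a /= ltn_ord.
  rewrite [X in _ + X](eq_bigr (fun _ => B)) => [|i _]; last by rewrite /a /= ltnNge leq_addr.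
  by rewrite !sumr_const card_ord -[_ *+ m]mulr_natr -[B *+ m]mulr_natr natrD; ring.
have sgn : \sum_(i < m + m) (a i / `|a i|) = 0.
  rewrite big_split_ord /=.
  rewrite (eq_bigr (fun _ => - 1)) => [|i _]; last first.
    rewrite /a /= ltn_ord normrN ger0_norm ?mulr_ge0 ?ltW //.
    by rewrite mulNr divff // mulf_neq0 // ?gt_eqF.
  rewrite [X in _ + X](eq_bigr (fun _ => 1)) => [|i _]; last first.
    by rewrite /a /= ltnNge leq_addr /= ger0_norm ?ltW // divff // gt_eqF.
  by rewrite !sumr_const card_ord mulNrn addrC subrr.
exists (fun i => fq j (a i) ((B ^+ 2 - a i ^+ 2) / 2)), (fun i => gq j (a i)).
have favgE : forall x, favg (fun i => fq j (a i) ((B ^+ 2 - a i ^+ 2) / 2)) x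
    = 2^-1 * (crd j x - B) ^+ 2.
  move=> x; rewrite /favg.
  rewrite (eq_bigr (fun i => 2^-1 * (crd j x ^+ 2 + B ^+ 2) + a i * crd j x)) => [|i _]; last first.
    by rewrite /fq; field.
  rewrite big_split /= -[\sum_(i < m + m) a i * _]mulr_suml suma sumr_const card_ord -[(2^-1 * _) *+ _]mulr_natr.
  rewrite mulrDr [_ * (_ * (m + m)%:R)]mulrC mulfK // mulNr mulrN -mulrA mulKf //.
  have H : forall y b : R, 2^-1 * (y ^+ 2 + b ^+ 2) - b * y = 2^-1 * (y - b) ^+ 2.
    by move=> y b; field.
  exact: H.
split.
  split.
    move=> x; rewrite favgE mulr_ge0 ?sqr_ge0 // invr_ge0 ler0n.
  move=> e he; exists (B *: e0 j); rewrite favgE /crd !mxE eqxx mulr1 subrr.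
  by rewrite expr0n /= mulr0 add0r.
split; first by move=> i; exact: gq_grad.
split; first by move=> i; exact: gq_lip.
move=> T alpha T1 alpha0.
set W := \matrix_(i, r) _.
set gs := fun i => gq j (a i).
have g0 : forall i, gs i 0 = a i *: e0 j.
  by move=> i; rewrite /gs /gq /crd !mxE add0r.
have it0 : forall t i, dngm W gs alpha 0 t i = 0.
  elim=> [//|t IH] i /=.
  rewrite (eq_bigr (fun r => (- ((m + m)%:R^-1 * alpha) * (a r / `|a r|)) *: e0 j)) => [|r _]; last first.
    rewrite IH g0 enorm_e0 sub0r mxE scalerA scalerN scalerA -scaleNr.
    congr (_ *: _); move: (_%:R^-1) (a r) (`|a r|) => u v w.
    by rewrite mulNr; congr (- _); rewrite -[RHS]mulrA; congr (u * _); rewrite mulrAC -mulrA.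
  by rewrite -scaler_suml -mulr_sumr sgn mulr0 scale0r.
have ga : enorm (gavg gs 0) = B.
  rewrite /gavg (eq_bigr (fun i => a i *: e0 j)) => [|i _]; last by rewrite g0.
  rewrite -scaler_suml suma scalerA enorm_e0 mulrN mulKf // normrN ger0_norm //.
  exact: ltW.
rewrite (eq_bigr (fun _ => \sum_(i < m + m) B)) => [|t _]; last first.
  by apply: eq_bigr => i _; rewrite it0 ga.
rewrite !sumr_const !card_ord -mulrnA -[B *+ _]mulr_natr mulrC mulfK //.
by rewrite pnatr_eq0 muln_eq0 negb_or -!lt0n addn_gt0 m0 T1.
Qed.
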